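(* For any $\beta_0,\beta_1\in(0,\pi)$ there exists a finite point set $P$ in the plane for which the function $\beta\mapsto\operatorname{area}(\mathcal{O}_\beta\mathcal{H}(P))$ on $(0,\pi)$ has local maxima at $\beta_0$ and at $\beta_1$.
   Context: For $\beta\in(0,\pi)$, $\mathcal{O}_\beta$ is the pair of lines through the origin with slopes $0$ and $\tan\beta$. Given an apex $a$, every point is uniquely $a+s(1,0)+t(\cos\beta,\sin\beta)$; an $\mathcal{O}_\beta$-quadrant with apex $a$ is one of the four open sets of such points with $s>0,t>0$; $s<0,t>0$; $s>0,t<0$; or $s<0,t<0$. A quadrant is $P$-free if it contains no point of $P$, and the $\mathcal{O}_\beta$-hull $\mathcal{O}_\beta\mathcal{H}(P)$ is the plane minus the union of all $P$-free $\mathcal{O}_\beta$-quadrants. $\operatorname{area}$ denotes Lebesgue measure. *)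

(* Defs.v *)
From HB Require Import structures.
From mathcomp Require Import all_boot all_order all_algebra.
From mathcomp Require Import all_classical all_reals all_analysis.
Set Implicit Arguments. Unset Strict Implicit. Unset Printing Implicit Defensive.
Import Order.TTheory GRing.Theory Num.Theory.
Local Open Scope classical_set_scope.
Local Open Scope ring_scope.

(* The O_beta-quadrant with apex a and sign pattern (sg1, sg2):
   points a + s(1,0) + t(cos b, sin b) with sg1*s > 0 and sg2*t > 0,
   where sg = true means "> 0" and sg = false means "< 0". *)
Definition sgn_pos (R : realType) (sg : bool) (x : R) : Prop :=
  if sg then 0 < x else x < 0.

Definition quadrant (R : realType) (b : R) (a : R * R) (sg1 sg2 : bool)
  : set (R * R) :=
  [set p | exists s t : R, sgn_pos sg1 s /\ sgn_pos sg2 t /\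
     p = (a.1 + s + t * cos b, a.2 + t * sin b)].

Definition Pfree (R : realType) (P : seq (R * R)) (Q : set (R * R)) : Prop :=
  forall q, q \in P -> ~ Q q.

Definition Ohull (R : realType) (b : R) (P : seq (R * R)) : set (R * R) :=
  ~` [set p | exists (a : R * R) (sg1 sg2 : bool),
        Pfree P (quadrant b a sg1 sg2) /\ quadrant b a sg1 sg2 p].

Definition area (R : realType) (A : set (R * R)) : \bar R :=
  ((@lebesgue_measure R) \x (@lebesgue_measure R))%E A.

Definition hull_area (R : realType) (P : seq (R * R)) (b : R) : \bar R :=
  area (Ohull b P).

Definition strict_local_max_on_0pi (R : realType) (f : R -> \bar R) (x0 : R)
  : Prop :=
  exists2 e : R, 0 < e &
    forall x : R, 0 < x -> x < pi -> 0 < `|x - x0| < e -> (f x < f x0)%E.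

(* Main.v *)
Require Import Defs.
From mathcomp Require Import all_boot all_order all_algebra.
From mathcomp Require Import all_classical all_reals all_analysis.
From mathcomp Require Import ring lra measurable_realfun.
Import Order.TTheory GRing.Theory Num.Theory numFieldNormedType.Exports.
Set Implicit Arguments. Unset Strict Implicit. Unset Printing Implicit Defensive.
Local Open Scope ring_scope.
Local Open Scope classical_set_scope.

Definition sgn_nn (R : realFieldType) (sg : bool) (x : R) : Prop :=
  if sg then 0 <= x else x <= 0.
Definition cone (R : realFieldType) (c : R) (sg1 sg2 : bool) (p q : R * R) : Prop :=
  sgn_nn sg2 (q.2 - p.2) /\ sgn_nn sg1 (q.1 - p.1 - (q.2 - p.2) * c).

Lemma ex_foldr (T : eqType) (C : T -> Prop) (l : seq T) :
  (exists2 q, q \in l & C q) -> foldr (fun q acc => C q \/ acc) False l.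
Proof.
elim: l => [|a l IH] [q]; first by rewrite in_nil.
rewrite in_cons => /orP[/eqP->|ql] h /=; first by left.
by right; apply: IH; exists q.
Qed.

Definition Pts (R : realFieldType) (c0 c1 k X : R) : seq (R * R) :=
  [:: (0, 0); (2 * k, 0); (k + c0, 1); (3 * k + c0, 1); (2 * c0, 2);
      (X, 7); (X - 2 * k, 7); (X - k - 2 * c1, 5); (X - 3 * k - 2 * c1, 5); (X - 4 * c1, 3)].

Definition Hyps (R : realFieldType) (c0 c1 k M X c : R) : Prop :=
  [/\ 0 < k <= 1, 0 <= M, -M <= c <= M, -M <= c0 <= M /\ -M <= c1 <= M & X = 20 * M + 20].


Lemma foldr_ex (T : eqType) (C : T -> Prop) (l : seq T) :
  foldr (fun q acc => C q \/ acc) False l -> exists2 q, q \in l & C q.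
Proof.
elim: l => [|a l IH] //= [h|h]; first by exists a; rewrite ?mem_head.
by have [q ql hq] := IH h; exists q; rewrite // in_cons ql orbT.
Qed.

Definition slab (R : realFieldType) (y0 y1 lo hi c : R) : set (R * R) :=
  [set p | (y0 < p.2 < y1) /\ (lo <= p.1 - p.2 * c <= hi)].

Definition loA1 (R : realFieldType) (c0 k c : R) := Num.max 0 (Num.min (k - (c - c0)) (- 2 * (c - c0))).
Definition hiA1 (R : realFieldType) (k : R) := 2 * k.
Definition loA2 (R : realFieldType) (c0 k c : R) := Num.max (Num.min 0 (k - (c - c0))) (- 2 * (c - c0)).
Definition hiA2 (R : realFieldType) (c0 k c : R) := Num.max (2 * k) (3 * k - (c - c0)).
Definition loB2 (R : realFieldType) (c1 k X c : R) :=
  Num.min (X - 7 * c - 2 * k) (X - 7 * c - 3 * k + 2 * (c - c1)).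
Definition hiB2 (R : realFieldType) (c1 k X c : R) :=
  Num.min (Num.max (X - 7 * c) (X - 7 * c - k + 2 * (c - c1))) (X - 7 * c + 4 * (c - c1)).
Definition loB1 (R : realFieldType) (k X c : R) := X - 7 * c - 2 * k.
Definition hiB1 (R : realFieldType) (c1 k X c : R) :=
  Num.min (X - 7 * c) (Num.max (X - 7 * c - k + 2 * (c - c1)) (X - 7 * c + 4 * (c - c1))).

Lemma ycases (R : realFieldType) (y : R) :
  y < 0 \/ (y = 0 \/ y = 1 \/ y = 2 \/ y = 3 \/ y = 5 \/ y = 7) \/ (0 < y < 1) \/ (1 < y < 2) \/
  (2 < y < 3) \/ (3 < y < 5) \/ (5 < y < 7) \/ 7 < y.
Proof. lra. Qed.

Lemma hull_upper (R : realFieldType) (c0 c1 k M X c x y : R) : Hyps c0 c1 k M X c ->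
  (forall sg1 sg2, exists2 q, q \in Pts c0 c1 k X & cone c sg1 sg2 (x, y) q) ->
  slab 0 1 (loA1 c0 k c) (hiA1 k) c (x, y) \/ slab 1 2 (loA2 c0 k c) (hiA2 c0 k c) c (x, y) \/
      slab 3 5 (loB2 c1 k X c) (hiB2 c1 k X c) c (x, y) \/
      slab 5 7 (loB1 k X c) (hiB1 c1 k X c) c (x, y) \/
      (y = 0 \/ y = 1 \/ y = 2 \/ y = 3 \/ y = 5 \/ y = 7).
Proof.
move=> [hk hM hc [hc0 hc1] hX] H.
have W1 := ex_foldr (H true false).
have W2 := ex_foldr (H false false).
have W3 := ex_foldr (H false true).
have W4 := ex_foldr (H true true).
move: W1 W2 W3 W4 => /=; rewrite /cone /sgn_nn /= => W1 W2 W3 W4.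
rewrite /slab /loA1 /hiA1 /loA2 /hiA2 /loB2 /hiB2 /loB1 /hiB1 /=.
case: (ycases y) => [hy|[hy|[hy|[hy|[hy|[hy|[hy|hy]]]]]]].
- by exfalso; clear -hy W2 hk hM hc hc0 hc1 hX; lra.
- by right; right; right; right.
- left; split => //; rewrite ge_max ge_min.
  by clear -hy W1 W2 W3 hk hM hc hc0 hc1 hX; lra.
- right; left; split => //; rewrite ge_max ge_min le_max.
  by clear -hy W1 W2 W3 hk hM hc hc0 hc1 hX; lra.
- by exfalso; clear -hy W1 W3 hk hM hc hc0 hc1 hX; lra.
- right; right; left; split => //; rewrite ge_min le_min le_max.
  by clear -hy W1 W3 W4 hk hM hc hc0 hc1 hX; lra.
- right; right; right; left; split => //; rewrite le_min le_max.
  by clear -hy W1 W3 W4 hk hM hc hc0 hc1 hX; lra.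
- by exfalso; clear -hy W4 hk hM hc hc0 hc1 hX; lra.
Qed.

Lemma lowA1 (R : realFieldType) (c0 c1 k M X c x y : R) : Hyps c0 c1 k M X c ->
  slab 0 1 (loA1 c0 k c) (hiA1 k) c (x, y) ->
  (forall sg1 sg2, exists2 q, q \in Pts c0 c1 k X & cone c sg1 sg2 (x, y) q).
Proof.
move=> [hk hM hc [hc0 hc1] hX]; rewrite /slab /loA1 /hiA1 /= ge_max ge_min => -[hy hx] sg1 sg2.
apply: foldr_ex => /=; rewrite /cone /sgn_nn /=.
by case: sg1; case: sg2; lra.
Qed.

Lemma lowA2 (R : realFieldType) (c0 c1 k M X c x y : R) : Hyps c0 c1 k M X c ->
  slab 1 2 (loA2 c0 k c) (hiA2 c0 k c) c (x, y) ->
  (forall sg1 sg2, exists2 q, q \in Pts c0 c1 k X & cone c sg1 sg2 (x, y) q).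
Proof.
move=> [hk hM hc [hc0 hc1] hX]; rewrite /slab /loA2 /hiA2 /= ge_max ge_min le_max => -[hy hx] sg1 sg2.
apply: foldr_ex => /=; rewrite /cone /sgn_nn /=.
by case: sg1; case: sg2; lra.
Qed.

Lemma lowB2 (R : realFieldType) (c0 c1 k M X c x y : R) : Hyps c0 c1 k M X c ->
  slab 3 5 (loB2 c1 k X c) (hiB2 c1 k X c) c (x, y) ->
  (forall sg1 sg2, exists2 q, q \in Pts c0 c1 k X & cone c sg1 sg2 (x, y) q).
Proof.
move=> [hk hM hc [hc0 hc1] hX]; rewrite /slab /loB2 /hiB2 /= ge_min le_min le_max => -[hy hx] sg1 sg2.
apply: foldr_ex => /=; rewrite /cone /sgn_nn /=.
by case: sg1; case: sg2; lra.
Qed.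

Lemma lowB1 (R : realFieldType) (c0 c1 k M X c x y : R) : Hyps c0 c1 k M X c ->
  slab 5 7 (loB1 k X c) (hiB1 c1 k X c) c (x, y) ->
  (forall sg1 sg2, exists2 q, q \in Pts c0 c1 k X & cone c sg1 sg2 (x, y) q).
Proof.
move=> [hk hM hc [hc0 hc1] hX]; rewrite /slab /loB1 /hiB1 /= le_min le_max => -[hy hx] sg1 sg2.
apply: foldr_ex => /=; rewrite /cone /sgn_nn /=.
by case: sg1; case: sg2; lra.
Qed.

Lemma quad_char (R : realType) (b : R) a sg1 sg2 p : 0 < sin b ->
  quadrant b a sg1 sg2 p <-> sgn_pos sg2 (p.2 - a.2) /\
     sgn_pos sg1 (p.1 - a.1 - (p.2 - a.2) * (cos b / sin b)).
Proof.
move=> s0; have sn0 : sin b != 0 by rewrite gt_eqF.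
split.
- case=> s [t [h1 [h2 ->]]] /=.
  have -> : a.1 + s + t * cos b - a.1 - (a.2 + t * sin b - a.2) * (cos b / sin b) = s.
    by field.
  have -> : a.2 + t * sin b - a.2 = t * sin b by ring.
  split=> //; move: h2; rewrite /sgn_pos; case: sg2 => h2.
  + exact: mulr_gt0.
  + by rewrite pmulr_llt0.
- move=> [h1 h2]; exists (p.1 - a.1 - (p.2 - a.2) * (cos b / sin b)).
  exists ((p.2 - a.2) / sin b); split => //; split.
  + move: h1; rewrite /sgn_pos; case: sg2 => h1.
    * by rewrite divr_gt0.
    * by rewrite pmulr_llt0 ?invr_gt0.
  + by case: p {h1 h2} => x y /=; congr (_, _); field.
Qed.

Lemma eps_exists (R : realType) (T : eqType) (l : seq T) (f g : T -> R) :
  (forall q, q \in l -> f q < 0 \/ g q < 0) ->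
  exists2 e : R, 0 < e & forall q, q \in l -> f q <= - e \/ g q <= - e.
Proof.
elim: l => [|x l IH] H.
  by exists 1 => // q; rewrite in_nil.
have [e e0 He] : exists2 e : R, 0 < e & forall q, q \in l -> f q <= - e \/ g q <= - e.
  by apply: IH => q ql; apply: H; rewrite in_cons ql orbT.
have [hx|hx] := H x (mem_head x l).
- exists (Num.min e (- f x)); first by rewrite lt_min e0 oppr_gt0.
  move=> q; rewrite in_cons => /orP[/eqP->|ql].
    by left; rewrite lerNr ge_min lexx orbT.
  have [h|h] := He q ql.
    by left; apply: (le_trans h); rewrite lerN2 ge_min lexx.
  by right; apply: (le_trans h); rewrite lerN2 ge_min lexx.
- exists (Num.min e (- g x)); first by rewrite lt_min e0 oppr_gt0.
  move=> q; rewrite in_cons => /orP[/eqP->|ql].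
    by right; rewrite lerNr ge_min lexx orbT.
  have [h|h] := He q ql.
    by left; apply: (le_trans h); rewrite lerN2 ge_min lexx.
  by right; apply: (le_trans h); rewrite lerN2 ge_min lexx.
Qed.

Lemma hull_char (R : realType) (b : R) (P : seq (R * R)) p : 0 < sin b ->
  Ohull b P p <-> forall sg1 sg2, exists2 q, q \in P & cone (cos b / sin b) sg1 sg2 p q.
Proof.
move=> s0; set c := cos b / sin b; rewrite /Ohull /setC /=; split.
- move=> Hh sg1 sg2.
  have [//|Hno] := pselect (exists2 q, q \in P & cone c sg1 sg2 p q).
  pose sv (sg : bool) (x : R) := if sg then x else - x.
  have Hl : forall q, q \in P -> (fun q => sv sg2 (q.2 - p.2)) q < 0 \/
     (fun q => sv sg1 (q.1 - p.1 - (q.2 - p.2) * c)) q < 0.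
    move=> q qP.
    have nc : ~ cone c sg1 sg2 p q by move=> hc; apply: Hno; exists q.
    move: nc; rewrite /cone /sgn_nn /sv.
    by clear Hno; case: sg1; case: sg2 => /= nc; lra.
  have [e e0 He] := eps_exists Hl.
  clear Hno Hl; exfalso; apply: Hh; exists (p.1 - sv sg1 e - sv sg2 e * c, p.2 - sv sg2 e), sg1, sg2.
  split.
  + move=> q qP; rewrite quad_char //= -/c.
    move: (He q qP); clear He; rewrite /sv /sgn_pos.
    by case: sg1; case: sg2 => /=; lra.
  + clear He; rewrite quad_char //= -/c /sgn_pos /sv.
    by case: sg1; case: sg2 => /=; lra.
- move=> H [a [sg1 [sg2 [Hfree Hq]]]].
  have [q qP [hc1 hc2]] := H sg1 sg2.
  apply: (Hfree q qP); move: Hq; rewrite !quad_char // -/c.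
  move: hc1 hc2; rewrite /sgn_nn /sgn_pos; clear Hfree H.
  by case: sg1; case: sg2 => /=; lra.
Qed.
Lemma measurable_lin (R : realType) (c : R) :
  measurable_fun [set: R * R] (fun p : R * R => p.1 - p.2 * c).
Proof.
apply: measurable_funB; first exact: measurable_fst.
apply: measurable_funM; first exact: measurable_snd.
exact: measurable_cst.
Qed.

Lemma slab_meas (R : realType) (y0 y1 lo hi c : R) : measurable (slab y0 y1 lo hi c).
Proof.
have -> : slab y0 y1 lo hi c = (setT `&` snd @^-1` `]y0, y1[) `&`
     (setT `&` (fun p : R * R => p.1 - p.2 * c) @^-1` `[lo, hi]).
  apply/seteqP; split => p /=; rewrite /slab /= !in_itv /=.
    by move=> [h1 h2].
  by move=> [[_ h1] [_ h2]].
apply: measurableI.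
  by apply: measurable_snd => //; exact: measurable_itv.
by apply: measurable_lin => //; exact: measurable_itv.
Qed.

Lemma slab_area (R : realType) (y0 y1 lo hi c : R) : y0 <= y1 ->
  area (slab y0 y1 lo hi c) = (Num.max 0 (hi - lo) * (y1 - y0))%:E.
Proof.
move=> y01; rewrite /area.
rewrite (@product_measure_unique _ _ _ _ R lebesgue_measure lebesgue_measure
   (lebesgue_measure \x^ lebesgue_measure)%E); last 2 first.
- by move=> A B mA mB; apply: product_measure2E.
- exact: slab_meas.
transitivity (\int[lebesgue_measure]_y (lebesgue_measure \o ysection (slab y0 y1 lo hi c)) y)%E; first by [].
rewrite (_ : _ \o _ = fun y => ((Num.max 0 (hi - lo))%:E * (\1_(`]y0, y1[ : set R) y)%:E)%E).
  rewrite ge0_integralZl ?integral_indic ?setIT//; last 2 first.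
  - exact: measurableT_comp.
  - by rewrite lee_fin le_max lexx.
  have hm : lebesgue_measure (`]y0, y1[ : set R) = ((y1 - y0)%:E)%E.
    rewrite lebesgue_measure_itv /= lte_fin.
    case: ltP => h; first by rewrite EFinB.
    have -> : y1 = y0 by apply/eqP; rewrite eq_le y01 h.
    by rewrite subrr.
  transitivity ((Num.max 0 (hi - lo))%:E * (y1 - y0)%:E)%E.
    by congr (_ * _)%E; exact: hm.
  by rewrite -EFinM.
rewrite funeqE => y; rewrite indicE /=.
have [yin|yout] := boolP (y \in `]y0, y1[).
  rewrite (_ : ((true%:R : R)%:E = 1)%E)// mule1.
  have -> : ysection (slab y0 y1 lo hi c) y = [set` `[lo + y * c, hi + y * c]%R].
    move: yin; rewrite ?inE /= ?in_itv /= => yin.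
    apply/seteqP; split => x; rewrite /ysection /= ?in_itv /= ?in_setE /slab /= ?in_itv /=.
      by move=> [_ /andP[h1 h2]]; apply/andP; split; lra.
    by move=> /andP[h1 h2]; split => //; apply/andP; split; lra.
  change (lebesgue_measure ([set` `[lo + y * c, hi + y * c]%R] : set R) = (Num.max 0 (hi - lo))%:E).
  apply: (etrans (lebesgue_measure_itv _)); rewrite /= lte_fin.
  case: leP => h.
    by rewrite max_l //; lra.
  by rewrite -EFinD; congr (_%:E); rewrite max_r; lra.
rewrite (_ : ((false%:R : R)%:E = 0)%E)// mule0.
have -> : ysection (slab y0 y1 lo hi c) y = set0.
  apply/seteqP; split => x //; rewrite /ysection /= in_setE /slab /=.
  by move=> [h _]; move/negP: yout; apply; rewrite in_setE /= in_itv /= h.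
by rewrite measure0.
Qed.

Lemma pre_meas (R : realType) (f : R * R -> R) sg :
  measurable_fun setT f -> measurable [set p | sgn_nn sg (f p)].
Proof.
move=> mf.
have -> : [set p | sgn_nn sg (f p)] =
   setT `&` f @^-1` (if sg then `[0, +oo[ else `]-oo, 0]).
  apply/seteqP; split => p /=; rewrite /sgn_nn; case: sg => /=;
    rewrite ?in_itv /= ?andbT //; by move=> [_ ].
by apply: mf => //; case: sg; exact: measurable_itv.
Qed.

Lemma cone_meas (R : realType) (c : R) sg1 sg2 (q : R * R) :
  measurable [set p | cone c sg1 sg2 p q].
Proof.
have -> : [set p | cone c sg1 sg2 p q] =
  [set p | sgn_nn sg2 ((fun p : R * R => q.2 - p.2) p)] `&`
  [set p | sgn_nn sg1 ((fun p : R * R => q.1 - p.1 - (q.2 - p.2) * c) p)] by [].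
apply: measurableI; apply: pre_meas.
  by apply: measurable_funB => //; exact: measurable_snd.
have -> : (fun p : R * R => q.1 - p.1 - (q.2 - p.2) * c) =
   (fun p => (q.1 - q.2 * c) - (p.1 - p.2 * c)).
  by apply/funext => p; ring.
by apply: measurable_funB => //; exact: measurable_lin.
Qed.

Lemma coneU_meas (R : realType) (c : R) sg1 sg2 (P : seq (R * R)) :
  measurable [set p | exists2 q, q \in P & cone c sg1 sg2 p q].
Proof.
elim: P => [|q P IH].
  by rewrite (_ : [set p | _] = set0) //; apply/seteqP; split => p // [q]; rewrite in_nil.
have -> : [set p | exists2 q0, q0 \in q :: P & cone c sg1 sg2 p q0] =
   [set p | cone c sg1 sg2 p q] `|` [set p | exists2 q, q \in P & cone c sg1 sg2 p q].
  apply/seteqP; split => p /=.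
    by move=> [q0]; rewrite in_cons => /orP[/eqP->|qP] h; [left|right; exists q0].
  by move=> [h|[q0 qP h]]; [exists q; rewrite ?mem_head|exists q0; rewrite ?in_cons ?qP ?orbT].
by apply: measurableU => //; exact: cone_meas.
Qed.

Lemma hull_meas (R : realType) (b : R) (P : seq (R * R)) : 0 < sin b ->
  measurable (Ohull b P).
Proof.
move=> s0; set c := cos b / sin b.
pose U sg1 sg2 := [set p | exists2 q, q \in P & cone c sg1 sg2 p q].
have -> : Ohull b P = U true true `&` U true false `&` U false true `&` U false false.
  apply/seteqP; split => p.
    by move=> /(hull_char _ _ s0) h; split; [split; [split|]|]; apply: h.
  by move=> [[[h1 h2] h3] h4]; apply/hull_char => // -[] [].
by repeat apply: measurableI; exact: coneU_meas.
Qed.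

Lemma hline_area (R : realType) (y0 : R) : area [set p : R * R | p.2 = y0] = 0%E.
Proof.
rewrite /area (_ : [set p | _] = setT `*` [set y0]).
  rewrite product_measure1E //.
  transitivity ((@lebesgue_measure R setT) * 0)%E; last exact: mule0.
  by congr (_ * _)%E; exact: lebesgue_measure_set1.
by apply/seteqP; split => -[x y] /=; rewrite /setX /=; [move=> ->| move=> [_ ->]].
Qed.

Definition Phi (R : realFieldType) (c0 c1 k X c : R) : R :=
  Num.max 0 (hiA1 k - loA1 c0 k c) + Num.max 0 (hiA2 c0 k c - loA2 c0 k c)
  + Num.max 0 (hiB2 c1 k X c - loB2 c1 k X c) * 2
  + Num.max 0 (hiB1 c1 k X c - loB1 k X c) * 2.

Lemma area_eq (R : realType) (c0 c1 k M X b : R) : 0 < sin b ->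
  Hyps c0 c1 k M X (cos b / sin b) ->
  hull_area (Pts c0 c1 k X) b = (Phi c0 c1 k X (cos b / sin b))%:E.
Proof.
move=> s0 hyp; set c := cos b / sin b.
pose mu := (@lebesgue_measure R \x @lebesgue_measure R)%E.
set H := Ohull b (Pts c0 c1 k X).
set S1 := slab 0 1 (loA1 c0 k c) (hiA1 k) c.
set S2 := slab 1 2 (loA2 c0 k c) (hiA2 c0 k c) c.
set S3 := slab 3 5 (loB2 c1 k X c) (hiB2 c1 k X c) c.
set S4 := slab 5 7 (loB1 k X c) (hiB1 c1 k X c) c.
pose L (y0 : R) := [set p : R * R | p.2 = y0].
pose L6 := L 0 `|` L 1 `|` L 2 `|` L 3 `|` L 5 `|` L 7.
have mL y0 : measurable (L y0).
  rewrite /L (_ : [set p | _] = setT `*` [set y0]); first exact: measurableX.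
  by apply/seteqP; split => -[x y] /=; rewrite /setX /=; [move=> ->| move=> [_ ->]].
have mL6 : measurable L6 by repeat apply: measurableU.
have mS1 : measurable S1 by exact: slab_meas.
have mS2 : measurable S2 by exact: slab_meas.
have mS3 : measurable S3 by exact: slab_meas.
have mS4 : measurable S4 by exact: slab_meas.
have mH : measurable H by exact: hull_meas.
have mU' : forall A B : set (R * R), measurable A -> measurable B -> measurable (A `|` B).
  by move=> A B mA mB; exact: measurableU.
have U0 A B : measurable A -> measurable B -> mu A = 0%E -> mu B = 0%E -> mu (A `|` B) = 0%E.
  move=> mA mB hA hB; apply/eqP; rewrite eq_le measure_ge0 andbT.
  apply: le_trans (measureU2 _ mA mB) _.
  by change (mu A + mu B <= 0)%E; rewrite hA hB adde0.
have hL y0 : mu (L y0) = 0%E by exact: hline_area.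
have L6_0 : mu L6 = 0%E.
  rewrite /L6.
  have m0 := mL 0; have m1 := mL 1; have m2 := mL 2; have m3 := mL 3; have m5 := mL 5; have m7 := mL 7.
  have h0 := hL 0; have h1 := hL 1; have h2 := hL 2; have h3 := hL 3; have h5 := hL 5; have h7 := hL 7.
  apply: (U0); [exact: (mU' _ _ (mU' _ _ (mU' _ _ (mU' _ _ m0 m1) m2) m3) m5) | exact: m7 | | exact: h7].
  apply: (U0); [exact: (mU' _ _ (mU' _ _ (mU' _ _ m0 m1) m2) m3) | exact: m5 | | exact: h5].
  apply: (U0); [exact: (mU' _ _ (mU' _ _ m0 m1) m2) | exact: m3 | | exact: h3].
  apply: (U0); [exact: (mU' _ _ m0 m1) | exact: m2 | | exact: h2].
  by apply: (U0); [exact: m0 | exact: m1 | exact: h0| exact: h1].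
have mU4 : measurable (S1 `|` S2 `|` S3 `|` S4) by exact: (mU' _ _ (mU' _ _ (mU' _ _ mS1 mS2) mS3) mS4).
have sub1 : H `<=` (S1 `|` S2 `|` S3 `|` S4) `|` L6.
  move=> [x y] /(hull_char _ _ s0) Hh.
  have := hull_upper hyp Hh.
  rewrite /S1 /S2 /S3 /S4 /L6 /L /=.
  move=> [h|[h|[h|[h|[h|[h|[h|[h|[h|h]]]]]]]]].
  - by left; left; left; left.
  - by left; left; left; right.
  - by left; left; right.
  - by left; right.
  - by right; left; left; left; left; left.
  - by right; left; left; left; left; right.
  - by right; left; left; left; right.
  - by right; left; left; right.
  - by right; left; right.
  - by right; right.
have sub2 : (S1 `|` S2 `|` S3 `|` S4) `<=` H.
  move=> [x y] h; apply/(hull_char _ _ s0).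
  move: h => [[[h|h]|h]|h].
  - exact: (lowA1 hyp h).
  - exact: (lowA2 hyp h).
  - exact: (lowB2 hyp h).
  - exact: (lowB1 hyp h).
have leM : forall A B : set (R * R), measurable A -> measurable B -> A `<=` B -> (mu A <= mu B)%E.
  by move=> A B mA mB AB; apply: (le_measure mu) => //; rewrite inE.
have eqH : mu H = mu (S1 `|` S2 `|` S3 `|` S4).
  apply/eqP; rewrite eq_le; apply/andP; split; last exact: leM.
  apply: le_trans (leM _ _ mH (mU' _ _ mU4 mL6) sub1) _.
  have leU A B : measurable A -> measurable B -> (mu (A `|` B) <= mu A + mu B)%E.
    by move=> mA mB; exact: (measureU2 _ mA mB).
  apply: le_trans (leU _ _ mU4 mL6) _.
  by change (mu (S1 `|` S2 `|` S3 `|` S4) + mu L6 <= mu (S1 `|` S2 `|` S3 `|` S4))%E; rewrite L6_0 adde0.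
have dis : forall A B : set (R * R), measurable A -> measurable B -> A `&` B = set0 ->
    mu (A `|` B) = (mu A + mu B)%E.
  by move=> A B mA mB AB; exact: (measureU mu).
have d12 : S1 `&` S2 = set0.
  by apply/seteqP; split => // -[x y] [[/= h1 _] [/= h2 _]]; lra.
have d3 : (S1 `|` S2) `&` S3 = set0.
  by apply/seteqP; split => // -[x y] [[[/= h1 _]|[/= h1 _]] [/= h2 _]]; lra.
have d4 : (S1 `|` S2 `|` S3) `&` S4 = set0.
  by apply/seteqP; split => // -[x y] [[[[/= h1 _]|[/= h1 _]]|[/= h1 _]] [/= h2 _]]; lra.
change (mu H = (Phi c0 c1 k X c)%:E).
rewrite eqH dis //; last exact: (mU' _ _ (mU' _ _ mS1 mS2) mS3).
rewrite dis //; last exact: (mU' _ _ mS1 mS2).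
rewrite dis //.
have a1 : mu S1 = (Num.max 0 (hiA1 k - loA1 c0 k c) * (1 - 0))%:E by apply: slab_area; lra.
have a2 : mu S2 = (Num.max 0 (hiA2 c0 k c - loA2 c0 k c) * (2 - 1))%:E by apply: slab_area; lra.
have a3 : mu S3 = (Num.max 0 (hiB2 c1 k X c - loB2 c1 k X c) * (5 - 3))%:E by apply: slab_area; lra.
have a4 : mu S4 = (Num.max 0 (hiB1 c1 k X c - loB1 k X c) * (7 - 5))%:E by apply: slab_area; lra.
rewrite a1 a2 a3 a4.
rewrite -!EFinD; congr (_%:E); rewrite /Phi /hiA1; ring.
Qed.

Definition PA (R : realFieldType) (c0 k c : R) :=
  Num.max 0 (hiA1 k - loA1 c0 k c) + Num.max 0 (hiA2 c0 k c - loA2 c0 k c).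
Definition PB (R : realFieldType) (c1 k X c : R) :=
  Num.max 0 (hiB2 c1 k X c - loB2 c1 k X c) * 2 + Num.max 0 (hiB1 c1 k X c - loB1 k X c) * 2.

Lemma PhiE (R : realFieldType) (c0 c1 k X c : R) : Phi c0 c1 k X c = PA c0 k c + PB c1 k X c.
Proof. by rewrite /Phi /PA /PB; ring. Qed.

Lemma PA_pos (R : realFieldType) (c0 k c : R) : 0 < k -> 0 <= c - c0 <= k / 4 ->
  PA c0 k c = 5 * k - (c - c0).
Proof.
move=> k0 he; rewrite /PA /hiA1 /loA1 /hiA2 /loA2.
rewrite (@min_r _ _ (k - (c - c0))); last lra.
rewrite (@max_l _ _ 0 (-2 * (c - c0))); last lra.
rewrite (@min_l _ _ 0); last lra.
rewrite (@max_l _ _ 0 (-2 * (c - c0))); last lra.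
rewrite (@max_r _ _ (2 * k)); last lra.
rewrite !max_r; lra.
Qed.

Lemma PA_neg (R : realFieldType) (c0 k c : R) : 0 < k -> - (k / 4) <= c - c0 <= 0 ->
  PA c0 k c = 5 * k + 3 * (c - c0).
Proof.
move=> k0 he; rewrite /PA /hiA1 /loA1 /hiA2 /loA2.
rewrite (@min_r _ _ (k - (c - c0))); last lra.
rewrite (@max_r _ _ 0 (-2 * (c - c0))); last lra.
rewrite (@min_l _ _ 0); last lra.
rewrite (@max_r _ _ 0 (-2 * (c - c0))); last lra.
rewrite (@max_r _ _ (2 * k)); last lra.
rewrite !max_r; lra.
Qed.

Lemma PA_far (R : realFieldType) (c0 k c : R) : 0 < k -> k <= c - c0 ->
  PA c0 k c = 3 * k + (c - c0).
Proof.
move=> k0 he; rewrite /PA /hiA1 /loA1 /hiA2 /loA2.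
rewrite (@min_r _ _ (k - (c - c0))); last lra.
rewrite (@max_l _ _ 0 (-2 * (c - c0))); last lra.
rewrite (@min_r _ _ 0); last lra.
rewrite (@max_l _ _ (k - (c - c0))); last lra.
rewrite (@max_l _ _ (2 * k)); last lra.
rewrite !max_r; lra.
Qed.

Lemma PB_pos (R : realFieldType) (c1 k X c : R) : 0 < k -> 0 <= c - c1 <= k / 4 ->
  PB c1 k X c = 10 * k - 4 * (c - c1).
Proof.
move=> k0 hf; rewrite /PB /hiB2 /loB2 /hiB1 /loB1.
rewrite (@max_l _ _ (X - 7 * c)); last lra.
rewrite (@min_l _ _ (X - 7 * c)); last lra.
rewrite (@min_r _ _ (X - 7 * c - 2 * k)); last lra.
rewrite (@max_r _ _ (X - 7 * c - k + 2 * (c - c1))); last lra.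
rewrite (@min_l _ _ (X - 7 * c)); last lra.
rewrite !max_r; lra.
Qed.

Lemma PB_neg (R : realFieldType) (c1 k X c : R) : 0 < k -> - (k / 4) <= c - c1 <= 0 ->
  PB c1 k X c = 10 * k + 12 * (c - c1).
Proof.
move=> k0 hf; rewrite /PB /hiB2 /loB2 /hiB1 /loB1.
rewrite (@max_l _ _ (X - 7 * c)); last lra.
rewrite (@min_r _ _ (X - 7 * c)); last lra.
rewrite (@min_r _ _ (X - 7 * c - 2 * k)); last lra.
rewrite (@max_r _ _ (X - 7 * c - k + 2 * (c - c1))); last lra.
rewrite (@min_r _ _ (X - 7 * c)); last lra.
rewrite !max_r; lra.
Qed.

Lemma PB_zero (R : realFieldType) (c1 k X c : R) : 0 < k -> c - c1 <= - (2 * k) ->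
  PB c1 k X c = 0.
Proof.
move=> k0 hf; rewrite /PB /hiB2 /loB2 /hiB1 /loB1.
rewrite (@max_l _ _ (X - 7 * c)); last lra.
rewrite (@min_r _ _ (X - 7 * c)); last lra.
rewrite (@min_r _ _ (X - 7 * c - 2 * k)); last lra.
rewrite (@max_l _ _ (X - 7 * c - k + 2 * (c - c1))); last lra.
rewrite (@min_r _ _ (X - 7 * c)); last lra.
rewrite !max_l; lra.
Qed.

Lemma phi0 (R : realFieldType) (c0 c1 k X c : R) : 0 < k <= 1 ->
  c0 = c1 \/ 8 * k <= c1 - c0 -> c != c0 -> - (k / 4) <= c - c0 <= k / 4 ->
  Phi c0 c1 k X c < Phi c0 c1 k X c0.
Proof.
move=> hk hc ne he; rewrite !PhiE.
have hk0 : 0 < k by lra.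
have A0 : PA c0 k c0 = 5 * k by rewrite PA_pos; lra.
case: hc => [<-|hc].
  have B0 : PB c0 k X c0 = 10 * k by rewrite PB_pos; lra.
  rewrite A0 B0; case: (ltgtP c c0) ne => // h _.
    by rewrite PA_neg ?PB_neg; lra.
  by rewrite PA_pos ?PB_pos; lra.
rewrite A0 !PB_zero; try lra.
case: (ltgtP c c0) ne => // h _.
  by rewrite PA_neg; lra.
by rewrite PA_pos; lra.
Qed.

Lemma phi1 (R : realFieldType) (c0 c1 k X c : R) : 0 < k <= 1 ->
  c0 = c1 \/ 8 * k <= c1 - c0 -> c != c1 -> - (k / 4) <= c - c1 <= k / 4 ->
  Phi c0 c1 k X c < Phi c0 c1 k X c1.
Proof.
move=> hk [<-|hc] ne he; first by apply: phi0 => //; left.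
rewrite !PhiE.
have hk0 : 0 < k by lra.
have B0 : PB c1 k X c1 = 10 * k by rewrite PB_pos; lra.
rewrite B0 !PA_far; try lra.
case: (ltgtP c c1) ne => // h _.
  by rewrite PB_neg; lra.
by rewrite PB_pos; lra.
Qed.

Lemma cot_cont (R : realType) (b0 eps : R) : 0 < b0 < pi -> 0 < eps ->
  exists2 d : R, 0 < d & forall b, `|b0 - b| < d ->
    `|cos b0 / sin b0 - cos b / sin b| < eps.
Proof.
move=> hb e0.
have s0 : sin b0 != 0 by rewrite gt_eqF // sin_gt0_pi.
have c1 : cos x @[x --> b0] --> cos b0 := @continuous_cos R b0.
have c2 : sin x @[x --> b0] --> sin b0 := @continuous_sin R b0.
have ct : (cos x * (sin x)^-1) @[x --> b0] --> cos b0 * (sin b0)^-1.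
  exact: (cvgM c1 (cvgV s0 c2)).
have := (cvgrPdist_lt _ _).1 ct eps e0.
move=> h; have [d /= d0 hd] := (nbhs_ballP _ _).1 (h _).
exists d => // b hb'.
Qed.

Lemma cot_inj (R : realType) (b b0 : R) : 0 < b < pi -> 0 < b0 < pi ->
  cos b / sin b = cos b0 / sin b0 -> b = b0.
Proof.
move=> hb hb0 e.
have sb : 0 < sin b by exact: sin_gt0_pi.
have sb0 : 0 < sin b0 by exact: sin_gt0_pi.
have e' : cos b * sin b0 = cos b0 * sin b.
  by move/eqP: e; rewrite eqr_div ?(gt_eqF sb) ?(gt_eqF sb0) // => /eqP.
case: (ltgtP b b0) => // h.
- have : 0 < sin (b0 - b) by apply: sin_gt0_pi; lra.
  by rewrite sinB; lra.
- have : 0 < sin (b - b0) by apply: sin_gt0_pi; lra.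
  by rewrite sinB; lra.
Qed.

Lemma smax_gen (R : realType) (bs c0 c1 k M X : R) : 0 < bs < pi -> 0 < k ->
  (forall c, `|c - cos bs / sin bs| <= k / 4 -> Hyps c0 c1 k M X c) ->
  (forall c, c != cos bs / sin bs -> - (k / 4) <= c - cos bs / sin bs <= k / 4 ->
     Phi c0 c1 k X c < Phi c0 c1 k X (cos bs / sin bs)) ->
  strict_local_max_on_0pi (hull_area (Pts c0 c1 k X)) bs.
Proof.
move=> hbs k0 hH hP.
have [d d0 hd] := @cot_cont R bs (k / 4) hbs (divr_gt0 k0 (ltr0n _ 4)).
exists d => // x x0 xpi /andP[nx xd].
have sx : 0 < sin x by apply: sin_gt0_pi; rewrite x0 xpi.
have sbs : 0 < sin bs by exact: sin_gt0_pi.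
have hdx : `|cos bs / sin bs - cos x / sin x| < k / 4 by apply: hd; rewrite distrC.
have hdx' : `|cos x / sin x - cos bs / sin bs| <= k / 4 by rewrite distrC ltW.
have hbs' : `|cos bs / sin bs - cos bs / sin bs| <= k / 4.
  by rewrite subrr normr0 ltW // divr_gt0.
rewrite (@area_eq R c0 c1 k M X x) //; last exact: hH.
rewrite (@area_eq R c0 c1 k M X bs) //; last exact: hH.
rewrite lte_fin; apply: hP.
  apply/eqP => e; move: nx; rewrite (@cot_inj R x bs) ?x0 ?xpi // subrr normr0 ltxx.
by move: hdx'; rewrite ler_norml.
by rewrite -ler_norml.
Qed.

Lemma absb (R : realFieldType) (x : R) : - `|x| <= x <= `|x|.
Proof. by rewrite -ler_norml. Qed.

Lemma main2 (R : realType) (b0 b1 : R) : 0 < b0 < pi -> 0 < b1 < pi ->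
  cos b0 / sin b0 <= cos b1 / sin b1 ->
  exists P : seq (R * R),
    strict_local_max_on_0pi (hull_area P) b0 /\
    strict_local_max_on_0pi (hull_area P) b1.
Proof.
move=> hb0 hb1; set c0 := cos b0 / sin b0; set c1 := cos b1 / sin b1 => h01.
pose M := `|c0| + `|c1| + 1.
pose k := if c0 == c1 then 1 else Num.min 1 ((c1 - c0) / 8).
pose X := 20 * M + 20.
have [hk hcase] : 0 < k <= 1 /\ (c0 = c1 \/ 8 * k <= c1 - c0).
  rewrite /k; case: eqP => [->|ne]; first by split; [lra|left].
  have lt : c0 < c1 by rewrite lt_neqAle h01 andbT; apply/eqP.
  split.
    by rewrite lt_min ge_min lexx /=; apply/andP; split => //; lra.
  right; have : Num.min 1 ((c1 - c0) / 8) <= (c1 - c0) / 8 by rewrite ge_min lexx orbT.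
  lra.
have a0 := absb c0; have a1 := absb c1.
have hyp : forall c, `|c - c0| <= k / 4 \/ `|c - c1| <= k / 4 -> Hyps c0 c1 k M X c.
  move=> c hc; split => //; rewrite /M; try lra.
  by case: hc; rewrite ler_norml; lra.
exists (Pts c0 c1 k X); split; apply: smax_gen => //; try lra.
- by move=> c hc; apply: hyp; left.
- by move=> c ne hc; apply: phi0.
- by move=> c hc; apply: hyp; right.
- by move=> c ne hc; apply: phi1.
Qed.

Theorem lemma5 (R : realType) (b0 b1 : R) :
  0 < b0 -> b0 < pi -> 0 < b1 -> b1 < pi ->
  exists P : seq (R * R),
    strict_local_max_on_0pi (hull_area P) b0 /\
    strict_local_max_on_0pi (hull_area P) b1.
Proof.
move=> h0 h0' h1 h1'.
have hb0 : 0 < b0 < pi by rewrite h0 h0'.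
have hb1 : 0 < b1 < pi by rewrite h1 h1'.
case: (leP (cos b0 / sin b0) (cos b1 / sin b1)) => h.
  exact: main2.
have [P [p1 p2]] := main2 hb1 hb0 (ltW h).
by exists P; split.
Qed.
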